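(* Let $p>2$ be prime, $q$ a power of $p$, $Q\in\mathbb{F}_q[x]$ a nonzero squarefree polynomial and $r\ge1$ an integer. Then $$\#\{c\in\mathbb{F}_q[x]:\deg c\le r,\ Q\mid c'\}\le\begin{cases}q^{\frac r2+\left(\frac12-\frac1p\right)(r-2\deg Q)+2p},&\deg Q<r<2\deg Q,\\ q^{\frac r2+\frac12(r-2\deg Q)+2p},&r\ge2\deg Q,\end{cases}$$ where $c'$ denotes the formal derivative of $c$. *)

(* Defs.v *)
From Stdlib Require Import Reals.
From mathcomp Require Import all_boot all_order all_algebra all_field.
Set Implicit Arguments. Unset Strict Implicit. Unset Printing Implicit Defensive.
Import GRing.Theory.
Local Open Scope ring_scope.

Definition squarefree_poly (F : fieldType) (Q : {poly F}) : Prop :=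
  forall d : {poly F}, d * d %| Q -> (size d <= 1)%N.

(* number of c in F[x] with deg c <= r and Q | c' ;
   {poly_(r.+1) F} = polynomials of size <= r+1, i.e. degree <= r. *)
Definition count_deriv_div (F : finFieldType) (Q : {poly F}) (r : nat) : nat :=
  #|[set c : {poly_(r.+1) F} | Q %| (val c)^`()]|.

(* degree of a polynomial (only used for Q != 0) *)
Definition degp (F : fieldType) (Q : {poly F}) : nat := (size Q).-1.

Local Open Scope R_scope.
Definition exponent1 (p r dQ : nat) : R :=
  INR r / 2 + (1/2 - 1 / INR p) * (INR r - 2 * INR dQ) + 2 * INR p.
Definition exponent2 (p r dQ : nat) : R :=
  INR r / 2 + 1/2 * (INR r - 2 * INR dQ) + 2 * INR p.

(* Main.v *)
Require Import Defs.
From Stdlib Require Import Reals.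
From mathcomp Require Import all_boot all_order all_algebra all_field.
From Stdlib Require Import Lra Psatz.
From HB Require Import structures.
From mathcomp Require Import zify.
Set Implicit Arguments. Unset Strict Implicit. Unset Printing Implicit Defensive.
Import GRing.Theory.

Section Part1.
Local Open Scope ring_scope.

Section JLemma.
Variable K : fieldType.

Lemma npolypP (n : nat) (a : K) (f g : {poly K}) :
  npolyp n (a *: f + g) = a *: npolyp n f + npolyp n g.
Proof.
apply/npolyP => i; rewrite /= coefD coefZ !coef_npolyp coefD coefZ.
by case: ifP; rewrite ?mulr0 ?addr0.
Qed.

Lemma npolypV (n : nat) (p : {poly K}) : (size p <= n)%N -> val (npolyp n p) = p.
Proof. exact: npolypK. Qed.

Lemma npolyp0 (n : nat) : npolyp n (0 : {poly K}) = 0.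
Proof. by apply/val_inj/npolypK; rewrite size_poly0. Qed.

Variables (d0 : nat) (P0 : {poly K}) (P : seq {poly K}).
Hypothesis sP0 : size P0 = d0.+1.
Hypothesis P0P : P0 \in P.
Hypothesis gcdP : forall G : {poly K}, (forall f, f \in P -> G %| f) -> (size G <= 1)%N.

Lemma P0_neq0 : P0 != 0.
Proof. by rewrite -size_poly_gt0 sP0. Qed.

Definition modP0 (g : {poly K}) : {poly_d0 K} := npolyp d0 (g %% P0).

Lemma modP0E g : val (modP0 g) = g %% P0.
Proof. by apply: npolypK; rewrite -ltnS -sP0 ltn_modp P0_neq0. Qed.

Lemma modP0P a f g : modP0 (a *: f + g) = a *: modP0 f + modP0 g.
Proof. by rewrite /modP0 modpD modpZl npolypP. Qed.

Definition Jgens (L : nat) : seq {poly_d0 K} :=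
  [seq modP0 ('X^n * f) | f <- P, n <- iota 0 L].

Lemma mem_Jgens L f n : f \in P -> (n < L)%N -> modP0 ('X^n * f) \in Jgens L.
Proof.
move=> fP nL; apply/allpairsP; exists (f, n) => //=; split => //.
by rewrite mem_iota.
Qed.

Lemma J_mono L : (<<Jgens L>> <= <<Jgens L.+1>>)%VS.
Proof.
apply/span_subvP => x /allpairsP [[f n] /= [fP]]; rewrite mem_iota => /andP [_ nL] ->.
by apply: memv_span; apply: mem_Jgens => //; rewrite add0n in nL; apply: ltnW.
Qed.

Definition xif (w : {poly_d0 K}) : {poly_d0 K} := modP0 ('X * val w).
Fact xif_is_linear : linear xif.
Proof. by move=> a f g; rewrite /xif linearP /= mulrDr -scalerAr modP0P. Qed.
HB.instance Definition _ := GRing.isLinear.Build K {poly_d0 K} {poly_d0 K} _ xif xif_is_linear.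
Definition xi := linfun xif.

Lemma xi_modP0 g : xi (modP0 g) = modP0 ('X * g).
Proof. by rewrite lfunE /= /xif modP0E /modP0 modp_mul. Qed.

Lemma xi_J L : (xi @: <<Jgens L>> <= <<Jgens L.+1>>)%VS.
Proof.
rewrite limg_span; apply/span_subvP => y /mapP [x /allpairsP [[f n] /= [fP]]].
rewrite mem_iota add0n => nL -> ->.
by rewrite xi_modP0 mulrA -exprS; apply: memv_span; apply: mem_Jgens.
Qed.

Section Stable.
Variable L : nat.
Hypothesis stab : <<Jgens L.+1>>%VS = <<Jgens L>>%VS.
Let U := <<Jgens L>>%VS.
Let inJ g := modP0 g \in U.

Lemma inJ_P f : f \in P -> inJ f.
Proof. by move=> fP; rewrite /inJ /U -stab -[f]mul1r -(expr0 'X); apply/memv_span/mem_Jgens. Qed.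

Lemma inJ_X g : inJ g -> inJ ('X * g).
Proof. by move=> Jg; rewrite /inJ /U -stab -xi_modP0; apply: (subvP (xi_J L)); apply: memv_img. Qed.

Lemma inJ_lin a f g : inJ f -> inJ g -> inJ (a *: f + g).
Proof. by move=> Jf Jg; rewrite /inJ modP0P; apply: memvD => //; apply: memvZ. Qed.

Lemma inJ0 : inJ 0.
Proof.
rewrite /inJ /modP0 mod0p.
have -> : npolyp d0 (0 : {poly K}) = 0 by apply/val_inj/npolypK; rewrite size_poly0.
exact: mem0v.
Qed.

Lemma inJ_mul h g : inJ g -> inJ (h * g).
Proof.
elim/poly_ind: h g => [|h c IH] g Jg; first by rewrite mul0r; apply: inJ0.
have -> : (h * 'X + c%:P) * g = 1 *: (h * ('X * g)) + (c *: g + 0).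
  by rewrite scale1r addr0 mulrDl -mulrA mul_polyC.
apply: inJ_lin; first by apply: IH; apply: inJ_X.
by apply: inJ_lin => //; apply: inJ0.
Qed.

Lemma inJ_gcd f g : inJ f -> inJ g -> inJ (gcdp f g).
Proof.
move=> Jf Jg; have /eqpP [[c1 c2] /= /andP [c10 c20] E] := egcdpE f g.
have -> : gcdp f g = (c2 / c1) *: ((egcdp f g).1 * f + (egcdp f g).2 * g).
  by rewrite mulrC -scalerA -E scalerA mulVf // scale1r.
set e := egcdp f g.
have -> : (c2 / c1) *: (e.1 * f + e.2 * g) = (c2 / c1) *: (1 *: (e.1 * f) + (e.2 * g + 0)) + 0.
  by rewrite scale1r !addr0.
apply: inJ_lin; last exact: inJ0.
apply: inJ_lin; first exact: inJ_mul.
by rewrite addr0; apply: inJ_mul.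
Qed.

Lemma stable_full : U = fullv.
Proof.
pose G := \big[@gcdp K/0]_(f <- P) f.
have JG : inJ G.
  rewrite /G; elim: P (inJ_P) => [|f s IH] H; first by rewrite big_nil; exact: inJ0.
  rewrite big_cons; apply: inJ_gcd; first by apply: H; rewrite mem_head.
  by apply: IH => h hs; apply: H; rewrite inE hs orbT.
have GP : forall f, f \in P -> G %| f.
  rewrite /G; elim: P => [|f s IH] h //; rewrite big_cons inE => /orP [/eqP ->|hs].
    exact: dvdp_gcdl.
  exact: dvdp_trans (dvdp_gcdr _ _) (IH _ hs).
have G0 : G != 0.
  apply/negP => /eqP G0; have := GP _ P0P; rewrite G0 dvd0p => /eqP P00.
  by move: P0_neq0; rewrite P00 eqxx.
have Gc := size1_polyC (gcdP GP); set c := G`_0 in Gc.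
have c0 : c != 0 by apply: contraNneq G0 => c0; rewrite Gc c0.
have J1 : inJ 1.
  have -> : (1 : {poly K}) = c^-1 *: G + 0 by rewrite addr0 Gc -mul_polyC -polyCM mulVf.
  by apply: inJ_lin => //; apply: inJ0.
apply/eqP; rewrite eqEsubv subvf /=; apply/subvP => w _.
have -> : w = modP0 (val w * 1).
  by apply: val_inj; rewrite modP0E mulr1 modp_small // sP0 ltnS size_npoly.
exact: inJ_mul.
Qed.

End Stable.

Lemma dim_J L : (minn L d0 <= \dim <<Jgens L>>)%N.
Proof.
elim: L => [|L IH]; first by rewrite min0n.
have sub := J_mono L.
have [eqU|neU] := eqVneq <<Jgens L.+1>>%VS <<Jgens L>>%VS.
  by rewrite eqU (stable_full eqU) dim_polyn geq_minr.
have lt : (\dim <<Jgens L>> < \dim <<Jgens L.+1>>)%N.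
  rewrite ltnNge; apply: contra neU => le; rewrite eq_sym eqEdim sub le //.
move: IH lt; set a := \dim <<Jgens L>>; set b := \dim <<Jgens L.+1>>; lia.
Qed.


Section SLemma.
Variables (M L : nat).
Hypothesis sizeP : forall f, f \in P -> (size f + L <= M.+1)%N.

Definition Sgens : seq {poly_M K} := [seq npolyp M ('X^n * f) | f <- P, n <- iota 0 L].

Lemma size_XnP f n : f \in P -> (n < L)%N -> (size ('X^n * f)%R <= M)%N.
Proof.
move=> fP nL; apply: leq_trans (size_mul_leq _ _) _; rewrite size_polyXn addSn /=.
have := sizeP fP; move: nL; set k := size f; set k' := size f; lia.
Qed.

Definition muf (w : {poly_M K}) : {poly_d0 K} := modP0 (val w).
Fact muf_is_linear : linear muf.
Proof. by move=> a f g; rewrite /muf linearP /= modP0P. Qed.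
HB.instance Definition _ := GRing.isLinear.Build K {poly_M K} {poly_d0 K} _ muf muf_is_linear.
Definition mu := linfun muf.

Definition nuf (h : {poly_L K}) : {poly_M K} := npolyp M (val h * P0).
Fact nuf_is_linear : linear nuf.
Proof. by move=> a f g; rewrite /nuf linearP /= mulrDl -scalerAl npolypP. Qed.
HB.instance Definition _ := GRing.isLinear.Build K {poly_L K} {poly_M K} _ nuf nuf_is_linear.
Definition nu := linfun nuf.

Lemma size_hP0 (h : {poly_L K}) : (size (val h * P0)%R <= M)%N.
Proof.
apply: leq_trans (size_mul_leq _ _) _; have := sizeP P0P; have := size_npoly h.
rewrite !sP0 addnS /=; set k := size h; set k' := size (val h); lia.
Qed.

Lemma nu_inj : injective nu.
Proof.
move=> a b; rewrite !lfunE /= /nuf => /(congr1 (@polyn _ _)).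
rewrite !npolypK ?size_hP0 // => /(mulIf P0_neq0) ab; exact: val_inj.
Qed.

Lemma dim_S : (L + minn L d0 <= \dim <<Sgens>>)%N.
Proof.
have := limg_ker_dim mu <<Sgens>>%VS.
set S := <<Sgens>>%VS => <-.
apply: leq_add.
  have : (nu @: fullv <= S :&: lker mu)%VS.
    case/andP: (npolyX_full K L) => /eqP spanX _.
    rewrite -spanX limg_span; apply/span_subvP => x /mapP [y /mapP [i _ ->] ->].
    have Ei : nu (npolyp L 'X^i) = npolyp M ('X^i * P0).
      by rewrite lfunE /= /nuf npolypV // size_polyXn.
    rewrite Ei memv_cap; apply/andP; split.
      by apply: memv_span; apply/allpairsP; exists (P0, nat_of_ord i); rewrite mem_iota /=.
    rewrite memv_ker lfunE /= /muf npolypV; last first.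
      by apply: size_XnP.
    by rewrite /modP0 modp_mull npolyp0.
  move/dimvS; apply: leq_trans.
  rewrite limg_dim_eq ?dim_polyn //.
  by rewrite capfv; apply/eqP/lker0P/nu_inj.
apply: leq_trans (dim_J L) _; apply: dimvS; apply/span_subvP => x /allpairsP [[f n] /= [fP]].
rewrite mem_iota add0n => nL ->.
have -> : modP0 ('X^n * f) = mu (npolyp M ('X^n * f)).
  by rewrite lfunE /= /muf npolypV // size_XnP.
by apply: memv_img; apply: memv_span; apply/allpairsP; exists (f, n); rewrite mem_iota.
Qed.

End SLemma.

End JLemma.

End Part1.
Section Part3.
Local Open Scope ring_scope.

Section Comp.
Variables (F : finFieldType) (p : nat) (Q : {poly F}).
Hypothesis pp : prime p.
Hypothesis pchar : (p \in [pchar F])%R.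
Hypothesis sqf : squarefree_poly Q.

Lemma p_gt0 : (0 < p)%N. Proof. exact: prime_gt0. Qed.

Definition Qc (a : nat) : {poly F} := \poly_(j < size Q) Q`_(a + p * j).

Lemma coef_Qc a j : (Qc a)`_j = Q`_(a + p * j).
Proof.
rewrite coef_poly; case: ltnP => // hj; rewrite nth_default //.
apply: leq_trans hj _; have := p_gt0; nia.
Qed.

Lemma Q_decomp : Q = \sum_(a < p) 'X^a * (Qc a \Po 'X^p).
Proof.
apply/polyP => k; rewrite coef_sum.
have kp : (k %% p < p)%N by rewrite ltn_mod p_gt0.
rewrite (bigD1 (Ordinal kp)) //= big1 ?addr0.
  have kE := divn_eq k p; set q := (k %/ p)%N in kE *; set m := (k %% p)%N in kE kp *.
  rewrite coefXnM ifN; last by rewrite -leqNgt kE leq_addl.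
  rewrite coef_comp_poly_Xn ?p_gt0 // ifT; last by rewrite kE addnK dvdn_mull.
  by rewrite coef_Qc kE addnK mulnK ?p_gt0 // addnC mulnC.
move=> [a ap] /= /negbTE ne; rewrite coefXnM; case: ltnP => // ak.
rewrite coef_comp_poly_Xn ?p_gt0 //; case: ifP => // /dvdnP [m km].
have : k = (m * p + a)%N by rewrite -km subnK.
move=> kE; move: ne; rewrite -val_eqE /= kE modnMDl modn_small // eqxx //.
Qed.


Lemma gcd_Qc G : (forall a, (a < p)%N -> G %| Qc a) -> (size G <= 1)%N.
Proof.
move=> hG.
have finj : injective (fun c : F => c ^+ p).
  by move=> x y /=; rewrite -!(pFrobenius_autE pchar) => /fmorph_inj.
pose rt := invF finj.
have rtK : forall c, (rt c) ^+ p = c by move=> c; rewrite /rt (f_invF finj).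
pose H := \poly_(i < size G) rt G`_i.
have pc : p \in [pchar {poly F}] by rewrite pchar_poly.
have HG : H ^+ p = G \Po 'X^p.
  rewrite comp_polyE /H poly_def -(pFrobenius_autE pc) rmorph_sum /=.
  apply: eq_bigr => i _; rewrite pFrobenius_autE exprZn rtK -!exprM mulnC //.
have dv : H ^+ p %| Q.
  rewrite {1}(Q_decomp) HG; apply: (big_ind (fun x => (G \Po 'X^p) %| x)); first exact: dvdp0.
    by move=> x y; apply: dvdp_add.
  by move=> a _; apply: dvdp_mull; apply: dvdp_comp_poly; apply: hG.
have : H * H %| Q.
  apply: dvdp_trans dv; rewrite -expr2; apply: dvdp_exp2l; exact: prime_gt1.
move/sqf => sH; apply/leq_sizeP => j j1.
have : H`_j = 0 by rewrite nth_default //; apply: leq_trans sH j1.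
rewrite coef_poly; case: ltnP => [_ rt0|hj _]; last by rewrite nth_default.
by rewrite -(rtK G`_j) rt0 expr0n gtn_eqF ?prime_gt0.
Qed.

End Comp.

End Part3.
Section Part2.
Local Open Scope ring_scope.

Lemma modp1_of_dvd (p k : nat) : (0 < p)%N -> (p %| k.+1)%N -> (k %% p)%N = p.-1.
Proof.
move=> p0 hd.
have kE := divn_eq k p; have km := ltn_pmod k p0.
have : (p %| (k %% p).+1)%N.
  by move: hd; rewrite {1}kE -addnS dvdn_addr // dvdn_mull.
move/(dvdn_leq (ltn0Sn _)) => h; lia.
Qed.

Section Main.
Variables (F : finFieldType) (p : nat) (Q : {poly F}) (r : nat).
Hypothesis pp : prime p.
Hypothesis pchar : (p \in [pchar F])%R.
Hypothesis Q0 : Q != 0.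
Hypothesis sqf : squarefree_poly Q.
Local Notation d := (size Q).-1.
Hypothesis hdr : (d <= r)%N.
Local Notation N := (r %/ p)%N.
Local Notation L := ((r - d) %/ p)%N.
Local Notation dl := (d %/ p)%N.

Lemma p0 : (0 < p)%N. Proof. exact: prime_gt0. Qed.

Lemma size_Q : size Q = d.+1.
Proof. by rewrite prednK // size_poly_gt0. Qed.

Definition red (f : {poly F}) : {poly_d F} := npolyp d (f %% Q).
Lemma redE f : val (red f) = f %% Q.
Proof. by apply: npolypK; rewrite -ltnS -size_Q ltn_modp. Qed.
Fact red_is_linear : linear red.
Proof. move=> a f g; apply: val_inj; rewrite /= !redE modpD modpZl //. Qed.
HB.instance Definition _ := GRing.isLinear.Build F {poly F} {poly_d F} _ red red_is_linear.

Lemma red_mulQ f : red (f * Q) = 0.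
Proof. by apply: val_inj; rewrite redE modp_mull. Qed.

Definition phif (c : {poly_(r.+1) F}) := red (val c)^`().
Fact phif_is_linear : linear phif.
Proof. move=> a f g; rewrite /phif /= derivD derivZ linearP //. Qed.
HB.instance Definition _ := GRing.isLinear.Build F {poly_(r.+1) F} {poly_d F} _ phif phif_is_linear.
Definition phi := linfun phif.
Lemma phiE c : phi c = red (val c)^`().
Proof. by rewrite lfunE. Qed.

Lemma card_V : count_deriv_div Q r = (#|F| ^ \dim (lker phi))%N.
Proof.
rewrite /count_deriv_div -card_vspace; apply: eq_card => c.
by rewrite inE memv_ker phiE -val_eqE /= redE.
Qed.

Definition psif (g : {poly_N F}) := red ('X^(p.-1) * (val g \Po 'X^p)).
Fact psif_is_linear : linear psif.
Proof.
move=> a f g; rewrite /psif.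
have -> : val (a *: f + g) = a *: val f + val g by [].
by rewrite comp_polyD comp_polyZ mulrDr -scalerAr linearP.
Qed.
HB.instance Definition _ := GRing.isLinear.Build F {poly_N F} {poly_d F} _ psif psif_is_linear.
Definition psi := linfun psif.

Local Notation E := (limg phi).

Lemma derE (f : {poly F}) : (size f <= r)%N -> (forall k, (k %% p)%N = p.-1 -> f`_k = 0) -> red f \in E.
Proof.
move=> sf hf.
pose c := \poly_(i < r.+1) (if i is i'.+1 then f`_i' / (i'.+1)%:R else 0).
have cd : c^`() = f.
  apply/polyP => k; rewrite coef_deriv coef_poly.
  case: ltnP => kr; last by rewrite mul0rn nth_default //; apply: leq_trans sf _; lia.
  have [h0|h0] := eqVneq ((k.+1)%:R : F) 0.
    rewrite hf ?mul0r ?mul0rn //; apply: modp1_of_dvd p0 _.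
    by rewrite (dvdn_pcharf pchar) h0.
  by rewrite -[X in X = _]mulr_natr divfK.
have -> : red f = phi (npolyp r.+1 c) by rewrite phiE npolypV ?size_poly // cd.
exact: memv_img (memvf _).
Qed.


Lemma E_psi_full : (E + limg psi)%VS = fullv.
Proof.
apply/eqP; rewrite eqEsubv subvf /=.
case/andP: (npolyX_full F d) => /eqP <- _.
apply/span_subvP => x /tnthP [i ->].
have id : (i < d)%N := ltn_ord i.
have -> : tnth (npolyX F d) i = red 'X^i.
  apply: val_inj; rewrite redE modp_small; first exact: npolyXE.
  rewrite size_polyXn; have h2 := size_Q; move: (i : nat) id h2 => k h1 h2; by rewrite h2 ltnS.
have [hi|hi] := eqVneq (i %% p)%N p.-1.
  rewrite -[red _]add0r; apply: memv_add; first exact: mem0v.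
  have iE := divn_eq i p; rewrite hi in iE.
  have hN : (size ('X^(i %/ p) : {poly F}) <= N)%N.
    rewrite size_polyXn leq_divRL ?p0 //; have := p0; lia.
  have -> : red 'X^i = psi (npolyp N 'X^(i %/ p)).
    rewrite lfunE /= /psif npolypV // comp_Xn_poly -exprM -exprD.
    by congr (red 'X^_); rewrite {1}iE mulnC addnC.
  exact: memv_img (memvf _).
rewrite -[red _]addr0; apply: memv_add; last exact: mem0v.
apply: derE; first by rewrite size_polyXn; lia.
move=> k hk; rewrite coefXn; case: eqP => // ki; move: hi; rewrite -ki hk eqxx //.
Qed.


Lemma coef_key n a (k : nat) : (a < p)%N ->
  ('X^(p.-1) * (('X^n * Qc p Q a) \Po 'X^p))`_k =
  if (k %% p == p.-1)%N then ('X^(p * n + p.-1 - a) * Q)`_k else 0.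
Proof.
move=> ap; have pg := p0.
have kE := divn_eq k p; set q := (k %/ p)%N in kE *; set s := (k %% p)%N in kE *.
have sp : (s < p)%N by rewrite ltn_mod.
rewrite coefXnM coef_comp_poly_Xn //.
have [hs|hs] := eqVneq s p.-1.
  rewrite coefXnM.
  have e1 : (k - p.-1 = q * p)%N by lia.
  rewrite ifN -?leqNgt; last by lia.
  rewrite e1 dvdn_mull // mulnK // coefXnM.
  have [qn|qn] := ltnP q n.
    rewrite ifT //; have := leq_mul2r p q.+1 n; rewrite qn orbT mulSn; lia.
  rewrite ifN -?leqNgt; last by have := leq_mul2r p n q; rewrite qn orbT; lia.
  rewrite coef_Qc //.
  have := leq_mul2r p n q; rewrite qn orbT => h.
  have -> : (p * (q - n) = q * p - n * p)%N by rewrite mulnBr mulnC [(p * n)%N]mulnC.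
  by have -> : (a + (q * p - n * p) = k - (p * n + p.-1 - a))%N by rewrite [(p * n)%N]mulnC; lia.
case: ltnP => // h; case: ifP => // /dvdnP [t ht].
move: hs; rewrite /s; have -> : k = (t * p + p.-1)%N by lia.
by rewrite modnMDl modn_small ?eqxx // prednK // ltnSn.
Qed.


Lemma psi_gen_E n a : (n < L)%N -> (a < p)%N ->
  (size ('X^n * Qc p Q a)%R <= N)%N -> psi (npolyp N ('X^n * Qc p Q a)) \in E.
Proof.
move=> nL ap sN; rewrite lfunE /= /psif npolypV //.
set G := 'X^n * Qc p Q a.
set m := (p * n + p.-1 - a)%N.
set T := 'X^(p.-1) * (G \Po 'X^p) - 'X^m * Q.
have -> : 'X^(p.-1) * (G \Po 'X^p) = T + 'X^m * Q by rewrite addrNK.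
rewrite linearD /= red_mulQ addr0.
have BT : forall k, (r <= k)%N -> ('X^m * Q)`_k = 0.
  move=> k rk; rewrite coefXnM; case: ltnP => // mk; rewrite nth_default // size_Q.
  have h1 : ((r - d) %/ p * p <= r - d)%N := leq_trunc_div _ _.
  have h2 : (n.+1 * p <= (r - d) %/ p * p)%N by rewrite leq_mul2r nL orbT.
  rewrite mulSn in h2; rewrite /m; have := p0; nia.
apply: derE.
  apply/leq_sizeP => k rk; rewrite coefB coef_key //; rewrite -/m BT //.
  by case: ifP; rewrite subrr.
by move=> k hk; rewrite coefB coef_key // hk eqxx subrr.
Qed.


Definition Pcs := [seq Qc p Q a | a <- iota 0 p].

Lemma size_Qc a : (size (Qc p Q a) <= dl.+1)%N.
Proof.
apply/leq_sizeP => j hj; rewrite coef_Qc // nth_default // size_Q.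
have := ltn_ceil d p0; have := leq_mul2l p dl.+1 j; rewrite hj orbT.
rewrite [(dl.+1 * p)%N]mulnC; lia.
Qed.

Lemma sizeP_Pcs f : f \in Pcs -> (size f + L <= N.+1)%N.
Proof.
move=> /mapP [a _ ->]; apply: leq_trans (leq_add (size_Qc a) (leqnn _)) _.
rewrite addSn ltnS leq_divRL ?p0 // mulnDl.
have h1 := leq_trunc_div d p; have h2 := leq_trunc_div (r - d) p; lia.
Qed.

Lemma sP0 : size (Qc p Q (d %% p)) = dl.+1.
Proof.
apply/eqP; rewrite eqn_leq size_Qc /=; rewrite ltnNge; apply/negP => h.
have := nth_default 0 h; rewrite coef_Qc // mulnC addnC -divn_eq.
have : Q`_d != 0.
  by have := Q0; rewrite -lead_coef_eq0 /lead_coef.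
by move=> /eqP.
Qed.

Lemma P0P : Qc p Q (d %% p) \in Pcs.
Proof. by apply: map_f; rewrite mem_iota ltn_mod p0. Qed.

Lemma gcdP_Pcs G : (forall f, f \in Pcs -> G %| f) -> (size G <= 1)%N.
Proof.
move=> h; apply: (gcd_Qc pp pchar sqf) => a ap; apply: h; apply: map_f.
by rewrite mem_iota.
Qed.

Lemma psi_S_E : (psi @: <<Sgens Pcs N L>> <= E)%VS.
Proof.
rewrite limg_span; apply/span_subvP => y /mapP [x /allpairsP [[f n] /= [fP]]].
rewrite mem_iota add0n => /andP [_ nL] -> ->.
move: fP => /mapP [a]; rewrite mem_iota add0n => /andP [_ ap] ->.
apply: psi_gen_E => //.
apply: leq_trans (size_mul_leq _ _) _; rewrite size_polyXn addSn /=.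
have : Qc p Q a \in Pcs by apply: map_f; rewrite mem_iota.
move/sizeP_Pcs; set k := size (Qc p Q a); set k' := size (Qc p Q a); move: nL; move: (((r - _) %/ p)%N) (N) => u v; lia.
Qed.

Lemma dim_ker_bound : (\dim (lker phi) + d + (L + minn L dl) <= r.+1 + N)%N.
Proof.
have h1 := limg_ker_dim phi fullv; rewrite capfv dim_polyn in h1.
have h2 := dimv_sum_cap E (limg psi); rewrite E_psi_full dim_polyn in h2.
have h3 := limg_ker_dim psi fullv; rewrite capfv dim_polyn in h3.
set S := <<Sgens Pcs N L>>%VS.
have h4 := limg_ker_dim psi S.
have h5 : (\dim (psi @: S) <= \dim (E :&: limg psi))%N.
  by apply: dimvS; rewrite subv_cap psi_S_E limgS // subvf.
have h6 : (\dim (S :&: lker psi) <= \dim (lker psi))%N by apply: dimvS; apply: capvSr.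
have h7 : (L + minn L dl <= \dim S)%N.
  exact: (dim_S sP0 P0P gcdP_Pcs sizeP_Pcs).
lia.
Qed.

End Main.

End Part2.

Section Reals.
Local Open Scope R_scope.

Lemma INR_expn (m n : nat) : INR (m ^ n)%N = INR m ^ n.
Proof.
elim: n => [|n IH] //=; by rewrite expnS -multE mult_INR IH.
Qed.

Lemma INR_leq (a b : nat) : (a <= b)%N -> INR a <= INR b.
Proof. by move/leP; apply: le_INR. Qed.

Lemma INR_add (a b : nat) : INR (a + b)%N = INR a + INR b.
Proof. by rewrite -plusE plus_INR. Qed.

Lemma INR_mul (a b : nat) : INR (a * b)%N = INR a * INR b.
Proof. by rewrite -multE mult_INR. Qed.

Lemma pow_le_Rpower (q D : nat) (e : R) : (1 < q)%N -> INR D <= e ->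
  INR (q ^ D)%N <= Rpower (INR q) e.
Proof.
move=> q1 De; have q0 : 0 < INR q by apply: lt_0_INR; apply/ltP; lia.
rewrite INR_expn -Rpower_pow //; apply: Rle_Rpower => //.
have := INR_leq q1; rewrite /= => h; lra.
Qed.

Lemma real_case1 (p r d D : nat) : (3 <= p)%N -> (d < r)%N ->
  (p * D + r + p * d <= p * r + 2 * d + 3 * p)%N -> INR D <= exponent1 p r d.
Proof.
move=> p3 dr H.
have HR := INR_leq H; rewrite !INR_add ?INR_mul in HR; rewrite /= in HR.
have P3 : 3 <= INR p by have := INR_leq p3; rewrite /=; lra.
rewrite /exponent1.
apply: (Rmult_le_reg_l (INR p)); first lra.
have -> : INR p * (INR r / 2 + (1 / 2 - 1 / INR p) * (INR r - 2 * INR d) + 2 * INR p) =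
           INR p * INR r - INR p * INR d - INR r + 2 * INR d + 2 * INR p * INR p.
  by field; lra.
simpl in HR; nra.
Qed.

Lemma real_case2 (p r d D : nat) : (D + d <= r + 2 * p)%N -> INR D <= exponent2 p r d.
Proof.
move=> H; have HR := INR_leq H; rewrite !INR_add ?INR_mul in HR; rewrite /= in HR.
rewrite /exponent2; simpl in HR; lra.
Qed.

End Reals.

Theorem mainTheorem15 (p : nat) (F : finFieldType) (Q : {poly F}) (r : nat) :
  prime p -> (2 < p)%N -> (p \in [pchar F])%R ->
  (Q != 0)%R -> squarefree_poly Q -> (1 <= r)%N ->
  ((degp Q < r)%N -> (r < 2 * degp Q)%N ->
     Rle (INR (count_deriv_div Q r)) (Rpower (INR #|F|) (exponent1 p r (degp Q))))
  /\
  ((2 * degp Q <= r)%N ->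
     Rle (INR (count_deriv_div Q r)) (Rpower (INR #|F|) (exponent2 p r (degp Q)))).
Proof.
move=> pp p2 pc Q0 sqf r1; rewrite /degp.
have q1 : (1 < #|F|)%N.
  by apply: leq_trans (finNzRing_gt1 F) _.
have pg := prime_gt0 pp.
set d := (size Q).-1.
have gen : (d <= r)%N -> exists D, count_deriv_div Q r = (#|F| ^ D)%N /\
     (D + d + ((r - d) %/ p + minn ((r - d) %/ p) (d %/ p)) <= r.+1 + r %/ p)%N.
  move=> hdr; exists (\dim (lker (phi Q r))); split.
    exact: card_V.
  by apply: dim_ker_bound.
have hN := leq_trunc_div r p.
have hL := ltn_ceil (r - d) pg.
have hd := ltn_ceil d pg.
have hL' := leq_trunc_div (r - d) p.
split.
  move=> h1 h2; have [D [-> HD]] := gen (ltnW h1).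
  apply: pow_le_Rpower => //.
  have Ld : ((r - d) %/ p <= d %/ p)%N by apply: leq_div2r; lia.
  rewrite (minn_idPl Ld) in HD.
  move: ((r - d) %/ p)%N (r %/ p)%N (d %/ p)%N HD hN hL hd Ld hL' => L N dl HD hN hL hd Ld hL'.
  apply: real_case1 => //; nia.
move=> h; have hdr : (d <= r)%N by lia.
have [D [-> HD]] := gen hdr.
apply: pow_le_Rpower => //.
have Ld : (d %/ p <= (r - d) %/ p)%N by apply: leq_div2r; lia.
rewrite (minn_idPr Ld) in HD.
move: ((r - d) %/ p)%N (r %/ p)%N (d %/ p)%N HD hN hL hd Ld hL' => L N dl HD hN hL hd Ld hL'.
have HN : (N <= L + dl + 1)%N.
  rewrite -ltnS -(ltn_pmul2r pg); nia.
by apply: real_case2; lia.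
Qed.
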